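(* Let $\mathbb{S}$ be a finite state space with $|\mathbb{S}|=K$ and let ${\bm Q}$ be the $K\times K$ transition rate matrix of a stationary and ergodic (irreducible) continuous-time Markov chain on $\mathbb{S}$. Regard ${\bm Q}$ as a function of its off-diagonal entries $q_{ij}\ge 0$ ($i\neq j$), the diagonal being determined by the requirement that each row sums to zero. Let ${\bm P}({\bm Q})={\bm I}+{\bm Q}/\gamma({\bm Q})$, where $\gamma$ is a positive function of the off-diagonal entries with $\gamma({\bm Q})>\max_{k}(-{\bm Q}_{kk})$, and fix $i\neq j$ such that ${\bm P}$ is differentiable with respect to $q_{ij}$ at ${\bm Q}$. Write ${\bm P}={\bm P}({\bm Q})$, let ${\bm\pi}$ be the unique stationary distribution of the chain (so ${\bm\pi}^{\mathsf T}{\bm Q}=0$), and let ${\bm\Pi}$ be the $K\times K$ matrix each of whose rows equals ${\bm\pi}^{\mathsf T}$. Then the limit $$\lim_{t\to\infty}\sum_{l=1}^{t}{\bm P}^{t-l}\,\frac{\partial {\bm P}({\bm Q})}{\partial q_{ij}}\,{\bm P}^{l-1}$$ exists and is unique, and it equals $${\bm\Pi}\sum_{l=0}^{\infty}\frac{\partial {\bm P}({\bm Q})}{\partial q_{ij}}\,{\bm P}^{l},$$ where the series converges.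
   Context: A transition rate matrix has nonnegative off-diagonal entries and rows summing to zero; for a stationary ergodic chain on a finite state space there is a unique stationary distribution ${\bm\pi}$. The matrix ${\bm P}={\bm I}+{\bm Q}/\gamma$ is the uniformized transition probability matrix of the chain; it has the same stationary distribution as ${\bm Q}$. In the paper's construction $\gamma({\bm Q})=\max_k(-{\bm Q}_{kk})+\epsilon$ for a fixed $\epsilon>0$. Matrix derivatives are entrywise. *)

(* Defs.v *)
From HB Require Import structures.
From mathcomp Require Import all_boot all_order all_algebra.
From mathcomp Require Import all_classical all_reals all_analysis.
Set Implicit Arguments. Unset Strict Implicit. Unset Printing Implicit Defensive.
Import Order.TTheory GRing.Theory Num.Theory.
Import numFieldNormedType.Exports.
Local Open Scope ring_scope.

Section Defs.
Variables (R : realType) (K : nat).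

Definition ratemx (q : 'M[R]_K) : 'M[R]_K :=
  \matrix_(a, b) if a == b then - (\sum_(c | c != a) q a c) else q a b.

Definition is_rate_matrix (Q : 'M[R]_K) : Prop :=
  (forall a b, a != b -> 0 <= Q a b) /\ (forall a, \sum_b Q a b = 0).

Definition irreducible (Q : 'M[R]_K) : Prop :=
  forall a b : 'I_K, connect [rel x y | (x != y) && (0 < Q x y)] a b.

Definition stationary_distribution (Q : 'M[R]_K) (pi : 'rV[R]_K) : Prop :=
  (forall a, 0 <= pi 0 a) /\ \sum_a pi 0 a = 1 /\ pi *m Q = 0.

Definition Pof (gamma : 'M[R]_K -> R) (q : 'M[R]_K) : 'M[R]_K :=
  1%:M + (gamma (ratemx q))^-1 *: ratemx q.

Definition Psec (gamma : 'M[R]_K -> R) (Q : 'M[R]_K) (i j a b : 'I_K) : R -> R :=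
  fun s => Pof gamma (Q + s *: delta_mx i j) a b.

Definition dP (gamma : 'M[R]_K -> R) (Q : 'M[R]_K) (i j : 'I_K) : 'M[R]_K :=
  \matrix_(a, b) derive1 (Psec gamma Q i j a b) 0.

Definition Pimx (pi : 'rV[R]_K) : 'M[R]_K := \matrix_(a, b) pi 0 b.

Definition Sseq (P D : 'M[R]_K) (t : nat) : 'M[R]_K :=
  \sum_(1 <= l < t.+1) (P ^+ (t - l) *m D *m P ^+ (l.-1)).

Definition Tseq (P D : 'M[R]_K) (n : nat) : 'M[R]_K :=
  \sum_(0 <= l < n) (D *m P ^+ l).

End Defs.

(* Main.v *)
Require Import Defs.
From HB Require Import structures.
From mathcomp Require Import all_boot all_order all_algebra.
From mathcomp Require Import all_classical all_reals all_analysis.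
From mathcomp Require Import ring lra zify.
Import Order.TTheory GRing.Theory Num.Theory.
Import numFieldNormedType.Exports.
Set Implicit Arguments. Unset Strict Implicit.
Local Open Scope classical_set_scope.
Local Open Scope ring_scope.
Lemma exmax (R : realType) (I : finType) (i0 : I) (f : I -> R) :
  exists x, forall y, f y <= f x.
Proof.
case: (@arg_maxP _ _ I i0 xpredT f erefl) => x _ H.
by exists x => y; apply: H.
Qed.

Lemma exmin (R : realType) (I : finType) (i0 : I) (f : I -> R) :
  exists x, forall y, f x <= f y.
Proof.
have [x Hx] := exmax i0 (fun y => - f y).
by exists x => y; have := Hx y; rewrite lerN2.
Qed.

Definition stoch (R : realType) n (M : 'M[R]_n) :=
  (forall a b, 0 <= M a b) /\ (forall a, \sum_b M a b = 1).

Definition OB (R : realType) n (A : 'M[R]_n) (c : R) :=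
  forall a a' b, `|A a b - A a' b| <= c.

Definition EB (R : realType) n (A : 'M[R]_n) (c : R) :=
  forall a b, `|A a b| <= c.

Lemma stoch1 (R : realType) n : stoch (1 : 'M[R]_n).
Proof.
split=> [a b|a]; first by rewrite mxE ler0n.
rewrite (bigD1 a) //= big1 ?addr0; first by rewrite mxE eqxx.
by move=> b ba; rewrite mxE eq_sym (negbTE ba).
Qed.

Lemma stoch_mul (R : realType) n (M N : 'M[R]_n) :
  stoch M -> stoch N -> stoch (M *m N).
Proof.
move=> [M0 M1] [N0 N1]; split=> [a b|a].
  by rewrite mxE; apply: sumr_ge0 => c _; apply: mulr_ge0.
under eq_bigr do rewrite mxE.
rewrite exchange_big /= -(M1 a); apply: eq_bigr => c _.
by rewrite -mulr_sumr N1 mulr1.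
Qed.

Lemma stoch_exp (R : realType) n (M : 'M[R]_n) k :
  stoch M -> stoch (M ^+ k).
Proof.
move=> HM; elim: k => [|k IH]; first exact: stoch1.
by rewrite exprS; apply: stoch_mul.
Qed.

Lemma row_bound (R : realType) n (M : 'M[R]_n) (d : R) (f : 'I_n -> R) a xM :
  stoch M -> (forall x, d <= M a x) -> (forall y, f y <= f xM) ->
  \sum_x M a x * f x <= (1 - n%:R * d) * f xM + d * \sum_x f x.
Proof.
move=> [M0 M1] Md Hf.
have -> : \sum_x M a x * f x = \sum_x (M a x - d) * f x + d * \sum_x f x.
  by rewrite mulr_sumr -big_split /=; apply: eq_bigr => x _; rewrite mulrBl subrK.
rewrite lerD2r.
have -> : 1 - n%:R * d = \sum_x (M a x - d).
  by rewrite sumrB M1 sumr_const card_ord mulr_natl.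
rewrite mulr_suml; apply: ler_sum => x _; apply: ler_wpM2l => //.
by rewrite subr_ge0.
Qed.

Lemma row_bound' (R : realType) n (M : 'M[R]_n) (d : R) (f : 'I_n -> R) a xm :
  stoch M -> (forall x, d <= M a x) -> (forall y, f xm <= f y) ->
  (1 - n%:R * d) * f xm + d * \sum_x f x <= \sum_x M a x * f x.
Proof.
move=> HM Md Hf.
have := @row_bound R n M d (fun x => - f x) a xm HM Md.
rewrite sumrN !mulrN -opprD.
under eq_bigr do rewrite mulrN.
rewrite sumrN lerN2; apply => y; by rewrite lerN2.
Qed.

Lemma contractOB (R : realType) n (M A : 'M[R]_n) (d c : R) :
  stoch M -> (forall a b, d <= M a b) -> 0 <= 1 - n%:R * d ->
  OB A c -> OB (M *m A) ((1 - n%:R * d) * c).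
Proof.
move=> HM Md s0 HA a a' b; rewrite !mxE.
have [xM HxM] := exmax a (fun x => A x b).
have [xm Hxm] := exmin a (fun x => A x b).
have Hc : A xM b - A xm b <= c by apply: le_trans (ler_norm _) (HA _ _ _).
have := row_bound (f := fun x => A x b) HM (Md a) HxM; have := row_bound (f := fun x => A x b) HM (Md a') HxM.
have := row_bound' (f := fun x => A x b) HM (Md a) Hxm; have := row_bound' (f := fun x => A x b) HM (Md a') Hxm.
have := ler_wpM2l s0 Hc.
rewrite ler_norml; move=> *; apply/andP; split; nra.
Qed.
Lemma bernoulli_le (R : realType) (x : R) k :
  0 <= x <= 1 -> 1 - k%:R * x <= (1 - x) ^+ k.
Proof.
move=> /andP[x0 x1]; elim: k => [|k IH]; first by rewrite mul0r subr0 expr0.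
rewrite exprSr.
have h1 : 0 <= 1 - x by rewrite subr_ge0.
have := ler_wpM2r h1 IH.
rewrite -natr1 mulrDl mul1r.
have : 0 <= k%:R * x * x by apply: mulr_ge0 => //; apply: mulr_ge0.
move=> *; nra.
Qed.

Lemma geo_conv (R : realType) (rho : R) N :
  0 <= rho < 1 -> (0 < N)%N ->
  exists C w : R, [/\ 0 <= C, 0 < w, w < 1 &
     forall m, rho ^+ (m %/ N) <= C * (w * w) ^+ m].
Proof.
move=> /andP[r0 r1] N0.
have N0' : (0 : R) < N%:R by rewrite ltr0n.
set x := (1 - rho) / (2 * N%:R).
have x0 : 0 < x by apply: divr_gt0; [rewrite subr_gt0|apply: mulr_gt0].
have x1 : x <= 1 / 2.
  rewrite /x ler_pdivrMr ?mulr_gt0 //.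
  have : 1 <= N%:R :> R by rewrite ler1n.
  move=> *; nra.
set w := 1 - x.
have w0 : 0 < w by rewrite /w subr_gt0; apply: le_lt_trans x1 _; lra.
have w1 : w < 1 by rewrite /w; lra.
set u := w * w.
have u0 : 0 < u by apply: mulr_gt0.
have u1 : u <= 1 by rewrite /u; nra.
have uN : rho <= u ^+ N.
  rewrite /u -expr2 -exprM.
  have := @bernoulli_le R x (2 * N)%N.
  rewrite natrM /w => h; apply: le_trans (h _); last by apply/andP; split; lra.
  rewrite /x mulrCA mulfV; first by lra.
  by rewrite mulf_neq0 // ?pnatr_eq0 // gt_eqF.
exists (u ^+ N)^-1, w; split => //.
  by rewrite invr_ge0 exprn_ge0 // ltW.
move=> m.
rewrite {2}(divn_eq m N) exprD mulrA.
set q := (m %/ N)%N.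
have h1 : rho ^+ q <= (u ^+ N) ^+ q by apply: lerXn2r => //; rewrite ?nnegrE // exprn_ge0 // ltW.
apply: le_trans h1 _.
rewrite -exprM mulnC.
have h2 : u ^+ N <= u ^+ (m %% N).
  apply: ler_wiXn2l => //; [by rewrite ltW | by rewrite ltnW // ltn_mod].
have uN0 : 0 < u ^+ N by apply: exprn_gt0.
rewrite mulrAC -[X in X <= _]mul1r; apply: ler_wpM2r; first by apply: exprn_ge0; rewrite ltW.
by rewrite ler_pdivlMl // mulr1.
Qed.
Lemma ratemx_rowsum (R : realType) n (q : 'M[R]_n) a : \sum_b ratemx q a b = 0.
Proof.
rewrite (bigD1 a) //= mxE eqxx.
rewrite (eq_bigr (fun b => q a b)); first by rewrite addNr.
by move=> b ba; rewrite mxE eq_sym (negbTE ba).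
Qed.

Lemma ratemx_id (R : realType) n (Q : 'M[R]_n) :
  is_rate_matrix Q -> ratemx Q = Q.
Proof.
move=> [_ HQ]; apply/matrixP => a b; rewrite mxE.
case: eqP => [<-|//]; have := HQ a.
rewrite (bigD1 a) //= => /eqP; rewrite addrC addr_eq0 => /eqP ->.
by rewrite opprK.
Qed.

Lemma Pof_rowsum (R : realType) n (g : 'M[R]_n -> R) q a :
  \sum_b Pof g q a b = 1.
Proof.
rewrite /Pof.
under eq_bigr do rewrite mxE [X in _ + X]mxE [X in X + _]mxE.
rewrite big_split /= -mulr_sumr.
rewrite (ratemx_rowsum q a) mulr0 addr0.
rewrite (bigD1 a) //= eqxx big1 ?addr0 //.
by move=> b ba; rewrite eq_sym (negbTE ba).
Qed.

Lemma dP_rowsum (R : realType) n (g : 'M[R]_n -> R) Q i j a :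
  (forall a b, derivable (Psec g Q i j a b) 0 1) ->
  \sum_b dP g Q i j a b = 0.
Proof.
move=> Hd.
under eq_bigr do rewrite mxE derive1E.
rewrite -derive_sum; last by move=> b; apply: Hd.
have -> : (\sum_(b < n) Psec g Q i j a b) = cst 1.
  apply/funext => s; rewrite fct_sumE /Psec /=.
  by rewrite Pof_rowsum.
by rewrite derive_cst.
Qed.

Lemma P_facts (R : realType) n (Q : 'M[R]_n) (g : 'M[R]_n -> R) :
  is_rate_matrix Q ->
  (forall Q' : 'M[R]_n, is_rate_matrix Q' ->
     0 < g Q' /\ (forall k, - Q' k k < g Q')) ->
  [/\ stoch (Pof g Q), forall a, 0 < Pof g Q a a &
      forall a b, a != b -> 0 < Q a b -> 0 < Pof g Q a b].
Proof.
move=> HQ Hg; have [g0 gk] := Hg Q HQ.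
have E a b : Pof g Q a b = (a == b)%:R + (g Q)^-1 * Q a b.
  by rewrite /Pof ratemx_id // !mxE.
have diag a : 0 < Pof g Q a a.
  rewrite E eqxx.
  have h : (- Q a a) / g Q < 1 by rewrite ltr_pdivrMr // mul1r.
  by move: h; rewrite mulNr mulrC /=; lra.
split => //.
- split => [a b|a]; last by apply: Pof_rowsum.
  case: (eqVneq a b) => [<-|ab]; first exact: ltW.
  rewrite E (negbTE ab) add0r; apply: mulr_ge0; first by rewrite invr_ge0 ltW.
  by case: HQ => H _; apply: H.
- move=> a b ab Qab; rewrite E (negbTE ab) add0r.
  by apply: mulr_gt0 => //; rewrite invr_gt0.
Qed.
Lemma pos_step (R : realType) n (M : 'M[R]_n) a c b k :
  stoch M -> 0 < M a c -> 0 < (M ^+ k) c b -> 0 < (M ^+ k.+1) a b.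
Proof.
move=> HM h1 h2; have [Mk0 _] := stoch_exp k HM; have [M0 _] := HM.
rewrite exprS mxE (bigD1 c) //=.
apply: lt_le_trans (mulr_gt0 h1 h2) _; rewrite lerDl.
by apply: sumr_ge0 => x _; apply: mulr_ge0.
Qed.

Lemma pos_mono (R : realType) n (M : 'M[R]_n) a b k j :
  stoch M -> 0 < M a a -> 0 < (M ^+ k) a b -> 0 < (M ^+ (j + k)) a b.
Proof.
move=> HM Ha Hk; elim: j => [//|j IH].
by rewrite addSn; apply: pos_step Ha IH.
Qed.

Lemma pos_path (R : realType) n (M : 'M[R]_n) (e : rel 'I_n) :
  stoch M -> (forall x y, e x y -> 0 < M x y) ->
  forall p a, path e a p -> 0 < (M ^+ (size p)) a (last a p).
Proof.
move=> HM He; elim => [|y p IH] a /=.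
  by move=> _; rewrite expr0 mxE eqxx ltr01.
move=> /andP[eay Hp]; apply: pos_step (He _ _ eay) _ => //.
exact: IH.
Qed.

Lemma primitive (R : realType) n (M : 'M[R]_n) (e : rel 'I_n) :
  stoch M -> (forall x y, e x y -> 0 < M x y) -> (forall a, 0 < M a a) ->
  (forall a b, connect e a b) ->
  exists N, forall a b, 0 < (M ^+ N) a b.
Proof.
move=> HM He Hd Hc.
have H1 a b : exists k, 0 < (M ^+ k) a b.
  have := Hc a b; move/connectP => [p Hp Eb]; rewrite Eb.
  exists (size p). apply: (pos_path HM He). exact: Hp.
suff : forall s : seq ('I_n * 'I_n), exists N, forall p, p \in s -> 0 < (M ^+ N) p.1 p.2.
  move=> /(_ (enum {: 'I_n * 'I_n})) [N HN]; exists N => a b.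
  by apply: (HN (a, b)); rewrite mem_enum.
elim => [|p s [N HN]]; first by exists 0%N.
have [k Hk] := H1 p.1 p.2.
exists (N + k)%N => x; rewrite inE => /orP[/eqP ->|xs].
  by apply: pos_mono.
by rewrite addnC; apply: pos_mono => //; apply: HN.
Qed.

Lemma unif_pos (R : realType) (T : finType) (f : T -> R) :
  (forall x, 0 < f x) -> exists2 d, 0 < d & forall x, d <= f x.
Proof.
move=> Hf.
suff : forall s : seq T, exists2 d, 0 < d & forall x, x \in s -> d <= f x.
  by move=> /(_ (enum T)) [d d0 Hd]; exists d => // x; apply: Hd; rewrite mem_enum.
elim => [|y s [d d0 Hd]]; first by exists 1.
exists (Num.min (f y) d); first by rewrite lt_min Hf d0.
move=> x; rewrite inE => /orP[/eqP ->|xs]; first by rewrite ge_min lexx.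
by rewrite ge_min Hd // orbT.
Qed.
Lemma OB_one (R : realType) n : OB (1 : 'M[R]_n) 1.
Proof.
move=> a a' b; rewrite !mxE.
by case: (a == b); case: (a' == b); rewrite /= ?subrr ?normr0 ?subr0 ?sub0r ?normrN ?normr1.
Qed.

Lemma OB_mulP (R : realType) n (M A : 'M[R]_n) c :
  stoch M -> OB A c -> OB (M *m A) c.
Proof.
move=> HM HA; have := @contractOB R n M A 0 c HM.
rewrite mulr0 subr0 mul1r; apply => //.
by move=> a b; case: HM => H _; apply: H.
Qed.

Lemma OB_pow (R : realType) n (M : 'M[R]_n) r : stoch M -> OB (M ^+ r) 1.
Proof.
move=> HM; elim: r => [|r IH]; first exact: OB_one.
by rewrite exprS; apply: OB_mulP.
Qed.

Lemma OB_iter (R : realType) n (M : 'M[R]_n) N d :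
  stoch M -> (forall a b, d <= (M ^+ N) a b) -> 0 <= 1 - n%:R * d ->
  forall q r, OB (M ^+ (q * N + r)) ((1 - n%:R * d) ^+ q).
Proof.
move=> HM Hd s0; elim => [|q IH] r; first by rewrite mul0n add0n expr0; apply: OB_pow.
rewrite mulSn -addnA exprD exprS.
apply: contractOB => //; first exact: stoch_exp.
Qed.

Lemma EB_E (R : realType) n (A : 'M[R]_n) (pi : 'rV[R]_n) c :
  (forall a, 0 <= pi 0 a) -> \sum_a pi 0 a = 1 -> pi *m A = pi ->
  OB A c -> EB (A - Pimx pi) c.
Proof.
move=> p0 p1 pA HA a b; rewrite !mxE.
have -> : pi 0 b = \sum_x pi 0 x * A x b by rewrite -{1}pA mxE.
have -> : A a b = \sum_x pi 0 x * A a b by rewrite -mulr_suml p1 mul1r.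
rewrite -sumrB; apply: le_trans (ler_norm_sum _ _ _) _.
rewrite -[c]mul1r -p1 mulr_suml; apply: ler_sum => x _.
by rewrite -mulrBr normrM ger0_norm //; apply: ler_wpM2l.
Qed.

Lemma pi_pow (R : realType) n (M : 'M[R]_n) (pi : 'rV[R]_n) k :
  pi *m M = pi -> pi *m M ^+ k = pi.
Proof.
move=> H; elim: k => [|k IH]; first by rewrite expr0 mulmx1.
by rewrite exprSr -mulmxE mulmxA IH.
Qed.

Lemma E_bound (R : realType) n (M : 'M[R]_n) (pi : 'rV[R]_n) (i0 : 'I_n) N d :
  stoch M -> (forall a b, d <= (M ^+ N) a b) -> 0 < d -> (0 < N)%N ->
  (forall a, 0 <= pi 0 a) -> \sum_a pi 0 a = 1 -> pi *m M = pi ->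
  exists C w : R, [/\ 0 <= C, 0 < w, w < 1 &
     forall m, EB (M ^+ m - Pimx pi) (C * (w * w) ^+ m)].
Proof.
move=> HM Hd d0 N0 p0 p1 pM.
have n0 : (0 < n)%N by case: n i0 {M pi HM Hd p0 p1 pM} => [[]|].
have s0 : 0 <= 1 - n%:R * d.
  have [_ HN1] := stoch_exp N HM.
  have h : \sum_(b < n) d <= \sum_b (M ^+ N) i0 b by apply: ler_sum => b _; apply: Hd.
  by move: h; rewrite HN1 sumr_const cardT size_enum_ord subr_ge0 mulr_natl.
have s1 : 1 - n%:R * d < 1.
  by rewrite ltrBlDr ltrDl mulr_gt0 // ltr0n.
have [C [w [C0 w0 w1 HC]]] := @geo_conv R (1 - n%:R * d) N ((introT andP (conj s0 s1))) N0.
exists C, w; split => // m.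
have HO : OB (M ^+ m) ((1 - n%:R * d) ^+ (m %/ N)).
  by rewrite {1}(divn_eq m N); apply: OB_iter.
move=> a b; apply: le_trans (HC m).
exact: (EB_E p0 p1 (pi_pow m pM) HO).
Qed.
Lemma EB_norm (R : realType) n (A : 'M[R]_n) c : 0 <= c -> EB A c -> `|A| <= c.
Proof.
move=> c0 HA; rewrite [X in X <= _]/Num.norm /= mx_normrE.
by apply/bigmax_leP; split => // -[a b] _; apply: HA.
Qed.

Lemma EB_entry (R : realType) n (A : 'M[R]_n) : EB A `|A|.
Proof.
move=> a b; rewrite [X in _ <= X]/Num.norm /= mx_normrE.
by apply/bigmax_geP; right; exists (a, b).
Qed.

Lemma EB_mul (R : realType) n (A B : 'M[R]_n) c d :
  EB A c -> EB B d -> EB (A *m B) (n%:R * (c * d)).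
Proof.
move=> HA HB a b; rewrite mxE; apply: le_trans (ler_norm_sum _ _ _) _.
have -> : n%:R * (c * d) = \sum_(x < n) (c * d).
  by rewrite sumr_const card_ord mulr_natl.
apply: ler_sum => x _; rewrite normrM; apply: ler_pM => //.
Qed.

Lemma EB_le (R : realType) n (A : 'M[R]_n) c c' : c <= c' -> EB A c -> EB A c'.
Proof. by move=> h HA a b; apply: le_trans (HA a b) h. Qed.

Lemma EB_sum (R : realType) n t (A : nat -> 'M[R]_n) (c : nat -> R) :
  (forall m, EB (A m) (c m)) -> EB (\sum_(0 <= m < t) A m) (\sum_(0 <= m < t) c m).
Proof.
move=> HA a b; rewrite summxE; apply: le_trans (ler_norm_sum _ _ _) _.
by apply: ler_sum => m _; apply: HA.
Qed.

Lemma mul_cvg (R : realType) n (A : 'M[R]_n) (B : nat -> 'M[R]_n) L :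
  B @ \oo --> L -> (fun t => A *m B t) @ \oo --> A *m L.
Proof.
move=> HB; apply: cvg_zero; apply: norm_cvg0.
have h1 : (fun t => B t - L) @ \oo --> (0 : 'M[R]_n).
  by rewrite -(subrr L); apply: cvgB => //; apply: cvg_cst.
have h2 : (fun t => n%:R * (`|A| * `|B t - L|)) @ \oo --> (0 : R).
  rewrite -(mulr0 (n%:R * `|A|)).
  under eq_fun do rewrite mulrA.
  apply: cvgM; first exact: cvg_cst.
  by apply/norm_cvg0P.
apply: (@squeeze_cvgr _ _ _ _ (fun=> 0) _ _ _ _ (cvg_cst _) h2).
near=> t; rewrite normr_ge0 /=.
apply: EB_norm; first by apply: mulr_ge0 => //; apply: mulr_ge0.
move=> a b; rewrite !mxE -sumrB.
have := EB_mul (EB_entry A) (EB_entry (B t - L)) a b.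
by rewrite mxE; under eq_bigr do rewrite mxE [(- L) _ _]mxE mulrDr mulrN.
Unshelve. all: by end_near.
Qed.

Lemma t_bound (R : realType) (w : R) t : 0 < w -> w < 1 ->
  t%:R * (w * w) ^+ t.-1 <= (w * (1 - w))^-1 * w ^+ t.
Proof.
move=> w0 w1; case: t => [|t] /=.
  rewrite mul0r expr0 mulr1 invr_ge0; apply: mulr_ge0; lra.
have key : t.+1%:R * w ^+ t * (1 - w) <= 1 - w ^+ t.+1.
  elim: t => [|t IH]; first by rewrite expr0 expr1 mulr1 mul1r.
  have e1 : t.+2%:R = t%:R + 2 :> R by rewrite -addn2 natrD.
  have e2 : t.+1%:R = t%:R + 1 :> R by rewrite -addn1 natrD.
  rewrite e1 !exprS; rewrite e2 exprS in IH.
  have a0 : 0 <= w ^+ t by rewrite exprn_ge0 // ltW.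
  have a1 : w ^+ t <= 1 by rewrite exprn_ile1 // ltW.
  have h1 := ler_wpM2l (ltW w0) IH.
  have h2 : (1 - w) * (w * w ^+ t) <= 1 - w.
    rewrite -[X in _ <= X]mulr1; apply: ler_wpM2l; first lra.
    by rewrite -exprS exprn_ile1 // ltW.
  nra.
have b0 : 0 < w * (1 - w) by rewrite mulr_gt0 // subr_gt0.
rewrite ler_pdivlMl // exprMn exprS.
have a0 : 0 <= w ^+ t by rewrite exprn_ge0 // ltW.
have wa0 : 0 <= w * w ^+ t by rewrite mulr_ge0 // ltW.
rewrite exprS in key.
have h := ler_wpM2l wa0 key.
have : 0 <= (w * w ^+ t) * (w * w ^+ t) by rewrite mulr_ge0.
move=> *; nra.
Qed.
HB.instance Definition _ (R : realType) (m n : nat) :=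
  Uniform_isComplete.Build 'M[R]_(m, n) (@mx_complete R m n).

Theorem proposition1 (R : realType) (K : nat) (Q : 'M[R]_K)
  (gamma : 'M[R]_K -> R) (pi : 'rV[R]_K) (i j : 'I_K) :
  is_rate_matrix Q -> irreducible Q ->
  (forall Q' : 'M[R]_K, is_rate_matrix Q' ->
     0 < gamma Q' /\ (forall k, - Q' k k < gamma Q')) ->
  i != j ->
  (forall a b, derivable (Psec gamma Q i j a b) 0 1) ->
  stationary_distribution Q pi ->
  let P := Pof gamma Q in
  let D := dP gamma Q i j in
  cvgn (Sseq P D) /\ cvgn (Tseq P D) /\
  limn (Sseq P D) = Pimx pi *m limn (Tseq P D).
Proof.
move=> HQ Hirr Hg ij Hder [p0 [p1 pQ]] P D.
have [HP Pdiag Pedge] := P_facts HQ Hg.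
have pP : pi *m P = pi.
  rewrite /P /Pof ratemx_id // mulmxDr mulmx1 -scalemxAr pQ scaler0 addr0 //.
have He : forall x y, [rel x y | (x != y) && (0 < Q x y)] x y -> 0 < P x y.
  by move=> x y /andP[]; apply: Pedge.
have [N HN] := primitive HP He Pdiag Hirr.
have HN' : forall p : 'I_K * 'I_K, 0 < (P ^+ (1 + N)) p.1 p.2.
  by move=> p; apply: pos_mono => //; apply: HN.
have [d d0 Hd] := unif_pos HN'.
have [C [w [C0 w0 w1 HE]]] :=
  @E_bound R K P pi i (1 + N)%N d HP (fun a b => Hd (a, b)) d0 erefl p0 p1 pP.
set Pi := Pimx pi.
have DPi : D *m Pi = 0.
  apply/matrixP => a b; rewrite mxE [RHS]mxE.
  under eq_bigr do rewrite [Pi _ _]mxE.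
  by rewrite -mulr_suml (dP_rowsum a Hder) mul0r.
set dd := `|D|.
have dd0 : 0 <= dd by apply: normr_ge0.
have HF m : EB (D *m P ^+ m) (K%:R * (dd * (C * (w * w) ^+ m))).
  have -> : D *m P ^+ m = D *m (P ^+ m - Pi) by rewrite mulmxBr DPi subr0.
  exact: EB_mul (EB_entry D) (HE m).
have cT : cvgn (Tseq P D).
  have -> : Tseq P D = series (fun l => D *m P ^+ l) by [].
  apply: normed_cvg.
  apply: (@series_le_cvg R _ (geometric (K%:R * (dd * C)) (w * w))).
  - by move=> m; apply: normr_ge0.
  - move=> m; rewrite /geometric /=; apply: mulr_ge0; last by apply: exprn_ge0; rewrite mulr_ge0 // ltW.
    by apply: mulr_ge0 => //; apply: mulr_ge0.
  - move=> m; rewrite /geometric /= -!mulrA; apply: EB_norm; last exact: HF.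
    by rewrite !mulr_ge0 // ?exprn_ge0 // mulr_ge0 // ltW.
  - apply: is_cvg_geometric_series; rewrite ger0_norm ?mulr_ge0 ?ltW //.
    nra.
set u := w * w.
set K1 := K%:R * (K%:R * (C * dd)) * C.
have K10 : 0 <= K1 by rewrite /K1 !mulr_ge0.
have u0 : 0 <= u by rewrite /u mulr_ge0 // ltW.
have HX t : EB (Sseq P D t - Pi *m Tseq P D t) (K1 * ((w * (1 - w))^-1 * w ^+ t)).
  have eqS : Sseq P D t - Pi *m Tseq P D t =
      \sum_(0 <= m < t) ((P ^+ (t - m.+1) - Pi) *m D *m (P ^+ m - Pi)).
    rewrite /Sseq /Tseq big_add1 /= mulmx_sumr -sumrB.
    apply: eq_bigr => m _.
    by rewrite mulmxBr -(mulmxA _ D Pi) DPi mulmx0 subr0 mulmxBl mulmxBl !mulmxA.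
  rewrite eqS.
  apply: EB_le (EB_sum t (fun m => EB_mul (EB_mul (HE (t - m.+1)%N) (EB_entry D)) (HE m))).
  rewrite (@eq_big_nat _ _ _ 0 t _ (fun=> K1 * u ^+ t.-1)); last first.
    move=> m /andP[_ mt].
    have e : (t - m.+1 + m = t.-1)%N by lia.
    by rewrite /K1 /u /dd -e exprD; ring.
  rewrite sumr_const_nat subn0 -mulr_natl mulrCA.
  apply: ler_wpM2l => //.
  exact: t_bound.
have cvgX : (fun t => Sseq P D t - Pi *m Tseq P D t) @ \oo --> (0 : 'M[R]_K).
  apply: norm_cvg0.
  apply: (squeeze_cvgr (f := fun=> 0) (h := geometric (K1 * (w * (1 - w))^-1) w)); last 2 first.
  - exact: cvg_cst.
  - by apply: cvg_geometric; rewrite ger0_norm // ltW.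
  near=> t; rewrite normr_ge0 /= /geometric /= -mulrA.
  apply: EB_norm; last exact: HX.
  have hw : 0 <= (w * (1 - w))^-1 by rewrite invr_ge0 mulr_ge0 // ?subr_ge0 ltW.
  by rewrite mulr_ge0 // mulr_ge0 // exprn_ge0 // ltW.
have cS : Sseq P D @ \oo --> 0 + Pi *m limn (Tseq P D).
  have -> : Sseq P D = (fun t => (Sseq P D t - Pi *m Tseq P D t) + Pi *m Tseq P D t).
    by apply/funext => t; rewrite subrK.
  apply: cvgD; first exact: cvgX.
  exact: mul_cvg cT.
rewrite add0r in cS.
split; first exact: cvgP cS.
split => //.
exact: cvg_lim cS.
Unshelve. all: by end_near.
Qed.
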